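(* Let $a_1,\dots,a_n>0$ and let $\tilde{x}\in\mathbb{R}^n$ satisfy $\sum_{j=1}^n a_j\tilde{x}_j\neq0$. Then $\pi_{\mathrm{PoS}}(\tilde{x})$ is the unique optimal solution of $$\min_{v\in\Delta_n}\ \big\|v-P^F(\tilde{x})\big\|_{\rightleftharpoons}.$$
   Context: $\Delta_n=\{v\in\mathbb{R}^n: v\ge0,\ \sum_i v_i=1\}$ is the probability simplex. For $y\in\mathbb{R}^n$ with $\sum_j a_jy_j\ne0$, the allocation formula is $P^F(y)_i=\frac{a_iy_i}{\sum_{j=1}^n a_jy_j}$, $i\in[n]$. For $v\in\mathbb{R}^n$, $\|v\|_{\rightleftharpoons}=\max_i v_i-\min_i v_i$. The projection-onto-simplex mechanism is $\pi_{\mathrm{PoS}}(\tilde{x})=\arg\min_{v\in\Delta_n}\|v-P^F(\tilde{x})\|_2$ (Euclidean projection of $P^F(\tilde{x})$ onto $\Delta_n$). *)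

(* Defs.v *)
From mathcomp Require Import all_boot all_order all_algebra.
From mathcomp Require Import reals.
Set Implicit Arguments. Unset Strict Implicit. Unset Printing Implicit Defensive.
Import Order.TTheory GRing.Theory Num.Theory.
Local Open Scope ring_scope.

Section Defs.
Variable R : realType.
Variable n : nat.

Definition in_simplex (v : 'I_n -> R) : Prop :=
  (forall i, 0 <= v i) /\ \sum_(i < n) v i = 1.

Definition PF (a y : 'I_n -> R) : 'I_n -> R :=
  fun i => a i * y i / \sum_(j < n) a j * y j.

Definition norm2 (v : 'I_n -> R) : R := Num.sqrt (\sum_(i < n) v i ^+ 2).

(* max_i v_i and min_i v_i (the value for n = 0 is irrelevant) *)
Definition vmax (v : 'I_n -> R) : R :=
  let s := [seq v i | i <- enum 'I_n] in foldr Num.max (head 0 s) s.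
Definition vmin (v : 'I_n -> R) : R :=
  let s := [seq v i | i <- enum 'I_n] in foldr Num.min (head 0 s) s.

Definition rnorm (v : 'I_n -> R) : R := vmax v - vmin v.

Definition vsub (v w : 'I_n -> R) : 'I_n -> R := fun i => v i - w i.

Definition is_simplex_proj (p w : 'I_n -> R) : Prop :=
  in_simplex w /\ forall v, in_simplex v -> norm2 (vsub w p) <= norm2 (vsub v p).

End Defs.

(* Main.v *)
Require Import Defs.
From mathcomp Require Import all_boot all_order all_algebra.
From mathcomp Require Import reals.
From mathcomp Require Import ring lra.
From Stdlib Require Import FunctionalExtensionality.
Import Order.TTheory GRing.Theory Num.Theory.
Local Open Scope ring_scope.
Set Implicit Arguments. Unset Strict Implicit.


Section VM.
Variables (R : realType) (n : nat).

Lemma foldr_max_ge (s : seq R) x0 y : y \in s -> y <= foldr Num.max x0 s.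
Proof.
elim: s => //= x s IH; rewrite in_cons => /orP [/eqP ->| /IH H].
  by rewrite le_max lexx.
by rewrite le_max H orbT.
Qed.

Lemma foldr_min_le (s : seq R) x0 y : y \in s -> foldr Num.min x0 s <= y.
Proof.
elim: s => //= x s IH; rewrite in_cons => /orP [/eqP ->| /IH H].
  by rewrite ge_min lexx.
by rewrite ge_min H orbT.
Qed.

Lemma foldr_max_in (s : seq R) x0 : foldr Num.max x0 s \in x0 :: s.
Proof.
elim: s => [|x s IH] /=; first exact: mem_head.
have [H|H] := leP x (foldr Num.max x0 s).
  move: IH; rewrite !in_cons => /orP[->|->]; by rewrite ?orbT.
by rewrite !in_cons eqxx !orbT.
Qed.

Lemma foldr_min_in (s : seq R) x0 : foldr Num.min x0 s \in x0 :: s.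
Proof.
elim: s => [|x s IH] /=; first exact: mem_head.
have [H|H] := leP x (foldr Num.min x0 s).
  by rewrite !in_cons eqxx !orbT.
move: IH; rewrite !in_cons => /orP[->|->]; by rewrite ?orbT.
Qed.

Lemma vmax_ge (v : 'I_n -> R) i : v i <= vmax v.
Proof. by apply: foldr_max_ge; apply: map_f; rewrite mem_enum. Qed.

Lemma vmin_le (v : 'I_n -> R) i : vmin v <= v i.
Proof. by apply: foldr_min_le; apply: map_f; rewrite mem_enum. Qed.

Lemma head_in (s : seq R) : s != [::] -> head 0 s \in s.
Proof. by case: s => // x s _; exact: mem_head. Qed.

Lemma vmax_in (v : 'I_n -> R) (i0 : 'I_n) : exists i, vmax v = v i.
Proof.
rewrite /vmax; set s := [seq v i | i <- enum 'I_n].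
have sn : s != [::].
  by apply/eqP => /(congr1 (fun l => v i0 \in l)); rewrite map_f // mem_enum.
have : foldr Num.max (head 0 s) s \in s.
  by move: (foldr_max_in s (head 0 s)); rewrite in_cons => /orP[/eqP ->|//]; exact: head_in.
by case/mapP => i _ ->; exists i.
Qed.

Lemma vmin_in (v : 'I_n -> R) (i0 : 'I_n) : exists i, vmin v = v i.
Proof.
rewrite /vmin; set s := [seq v i | i <- enum 'I_n].
have sn : s != [::].
  by apply/eqP => /(congr1 (fun l => v i0 \in l)); rewrite map_f // mem_enum.
have : foldr Num.min (head 0 s) s \in s.
  by move: (foldr_min_in s (head 0 s)); rewrite in_cons => /orP[/eqP ->|//]; exact: head_in.
by case/mapP => i _ ->; exists i.
Qed.
End VM.
Arguments vmax_ge {R n}.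
Arguments vmin_le {R n}.
Arguments vmax_in {R n}.
Arguments vmin_in {R n}.

Section Aux.
Variables (R : realType) (n : nat) (p : 'I_n -> R).
Hypothesis hp : \sum_i p i = 1.
Variable i0 : 'I_n.

Lemma tau_ex : exists t, 0 <= t /\ \sum_i Num.max (p i - t) 0 = 1.
Proof.
pose g (A : {set 'I_n}) := (\sum_(i in A) p i - 1) / (#|A|%:R : R).
have [A [AnE Amax]] : exists A, A != set0 /\ forall B, B != set0 -> g B <= g A.
  have H1 : [set i0] != set0 by apply/set0Pn; exists i0; rewrite inE.
  case: (arg_maxP g (P := fun A : {set 'I_n} => A != set0) H1) => A HA Hmax.
  by exists A; split => // B HB; apply: Hmax.
set t := g A; exists t.
have cA : (0 < #|A|)%N by rewrite card_gt0.
have cAR : (0 : R) < #|A|%:R by rewrite ltr0n.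
have HA : \sum_(i in A) p i - 1 = t * #|A|%:R.
  by rewrite /t /g divfK // gt_eqF.
split.
  have nT : [set: 'I_n] != set0 by apply/set0Pn; exists i0.
  have := Amax _ nT; rewrite /g.
  have -> : \sum_(i in [set: 'I_n]) p i = \sum_i p i by apply: eq_bigl => i; rewrite inE.
  by rewrite hp subrr mul0r.
apply/eqP; rewrite eq_le; apply/andP; split.
  rewrite (bigID (fun i => t < p i)) /=.
  rewrite [X in _ + X]big1 ?addr0; last first.
    by move=> i; rewrite -leNgt -subr_le0 => /max_idPr.
  rewrite (eq_bigr (fun i => p i - t)); last by move=> i Hi; apply/max_idPl; rewrite subr_ge0 ltW.
  set S := [set i | t < p i].
  have -> : \sum_(i | t < p i) (p i - t) = \sum_(i in S) (p i - t) by apply: eq_bigl => i; rewrite inE.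
  have [->|SnE] := eqVneq S set0.
    by rewrite big_set0 ler01.
  have := Amax _ SnE; rewrite -/t {1}/g.
  have cS : (0 : R) < #|S|%:R by rewrite ltr0n card_gt0.
  rewrite ler_pdivrMr // sumrB sumr_const -mulr_natr => H; lra.
have -> : 1 = \sum_(i in A) (p i - t).
  by rewrite sumrB sumr_const -mulr_natr -HA subKr.
rewrite [X in _ <= X](bigID (fun i => i \in A)) /=.
rewrite -[X in X <= _]addr0; apply: lerD.
  by apply: ler_sum => i _; rewrite le_max lexx.
by apply: sumr_ge0 => i _; rewrite le_max lexx orbT.
Qed.

Variables (t : R).
Hypotheses (t0 : 0 <= t) (ht : \sum_i Num.max (p i - t) 0 = 1).
Let w := fun i => Num.max (p i - t) 0.

Lemma w_simplex : in_simplex w.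
Proof. by split => // i; rewrite /w le_max lexx orbT. Qed.

Lemma w_cross v : in_simplex v -> 0 <= \sum_i (v i - w i) * (w i - p i).
Proof.
case=> v0 v1.
have H : forall i, - t * (v i - w i) <= (v i - w i) * (w i - p i).
  move=> i; rewrite /w; case: (leP (p i - t) 0) => Hi.
    have := v0 i => Hv; nra.
  nra.
apply: le_trans (ler_sum _ (fun i _ => H i)).
by rewrite -mulr_sumr sumrB v1 ht subrr mulr0.
Qed.

Lemma w_sq v : in_simplex v ->
  \sum_i (w i - p i) ^+ 2 + \sum_i (v i - w i) ^+ 2 <= \sum_i (v i - p i) ^+ 2.
Proof.
move=> Hv; have := w_cross Hv.
have -> : \sum_i (v i - p i) ^+ 2 = \sum_i (w i - p i) ^+ 2 + \sum_i (v i - w i) ^+ 2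
   + 2 * \sum_i (v i - w i) * (w i - p i).
  rewrite mulr_sumr -!big_split /=; apply: eq_bigr => i _; ring.
move=> H; lra.
Qed.

Lemma sq_ge0 (u : 'I_n -> R) : 0 <= \sum_i u i ^+ 2.
Proof. by apply: sumr_ge0 => i _; rewrite sqr_ge0. Qed.

Lemma w_proj : is_simplex_proj p w.
Proof.
split; first exact: w_simplex.
move=> v Hv; rewrite /norm2 /vsub ler_sqrt; last exact: sq_ge0.
have := w_sq Hv; have := sq_ge0 (fun i => v i - w i); lra.
Qed.

Lemma w_uniq w' : is_simplex_proj p w' -> w' = w.
Proof.
case=> Hw' Hmin; have := Hmin _ w_simplex.
rewrite /norm2 /vsub ler_sqrt; last exact: sq_ge0.
have := w_sq Hw' => H1 H2.
have H3 : \sum_i (w' i - w i) ^+ 2 = 0.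
  apply/eqP; rewrite eq_le sq_ge0 andbT; lra.
apply: functional_extensionality => i.
have := psumr_eq0P (fun i _ => sqr_ge0 (w' i - w i)) H3 (i := i) isT.
by move/eqP; rewrite sqrf_eq0 subr_eq0 => /eqP.
Qed.


Lemma sumS : \sum_(i | t < p i) (p i - t) = 1.
Proof.
rewrite -ht big_mkcond /=; apply: eq_bigr => i _.
case: ifP => H; first by apply/esym/max_idPl; rewrite subr_ge0 ltW.
by apply/esym/max_idPr; rewrite subr_le0 leNgt H.
Qed.

Lemma L v : in_simplex v -> -t <= vmin (vsub v p) ->
  (forall i, t < p i -> v i = p i - t) /\ (forall i, ~~ (t < p i) -> v i = 0).
Proof.
case=> v0 v1 Hm.
have Hd : forall i, 0 <= v i - p i + t.
  move=> i; have := vmin_le (vsub v p) i; rewrite /vsub => H; lra.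
have E1 : \sum_(i | t < p i) (v i - p i + t) = \sum_(i | t < p i) v i - 1.
  rewrite -sumS -sumrB; apply: eq_bigr => i _; ring.
have E2 : \sum_(i | t < p i) v i + \sum_(i | ~~ (t < p i)) v i = 1.
  by rewrite -v1 [in RHS](bigID (fun i => t < p i)).
have G1 : 0 <= \sum_(i | t < p i) (v i - p i + t) by apply: sumr_ge0 => i _.
have G2 : 0 <= \sum_(i | ~~ (t < p i)) v i by apply: sumr_ge0 => i _.
have Z1 : \sum_(i | t < p i) (v i - p i + t) = 0 by lra.
have Z2 : \sum_(i | ~~ (t < p i)) v i = 0 by lra.
split => i Hi.
  have := psumr_eq0P (fun i _ => Hd i) Z1 Hi => H; lra.
exact: (psumr_eq0P (fun i _ => v0 i) Z2 Hi).
Qed.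

Lemma exS : exists i, t < p i.
Proof.
case: (pickP (fun i => t < p i)) => [i Hi|H]; first by exists i.
have := sumS; rewrite big_pred0 // => /eqP; rewrite eq_sym oner_eq0.
by [].
Qed.

Lemma dw_ge i : -t <= vsub w p i.
Proof. rewrite /vsub /w; have : p i - t <= Num.max (p i - t) 0 by rewrite le_max lexx.
lra. Qed.

Lemma rnorm_w : exists i1, rnorm (vsub w p) <= vsub w p i1 + t.
Proof.
have [i1 Hi1] := vmax_in (vsub w p) i0.
have [j1 Hj1] := vmin_in (vsub w p) i0.
exists i1; rewrite /rnorm Hi1 Hj1; have := dw_ge j1; lra.
Qed.

Lemma wopt v : in_simplex v -> rnorm (vsub w p) <= rnorm (vsub v p).
Proof.
move=> Hv; have [v0 v1] := Hv.
have Hm : vmin (vsub v p) <= - t.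
  have [H|H] := leP (-t) (vmin (vsub v p)); last exact: ltW.
  have [[i Hi] [L1 _]] := (exS, L Hv H).
  apply: le_trans (vmin_le _ i) _; rewrite /vsub L1 //; lra.
have [i1 Hi1] := rnorm_w.
have R0 : 0 <= rnorm (vsub v p).
  by rewrite /rnorm subr_ge0; apply: le_trans (vmin_le _ i0) (vmax_ge _ i0).
have R1 : vsub v p i1 - vmin (vsub v p) <= rnorm (vsub v p).
  by rewrite /rnorm lerD2r vmax_ge.
move: Hi1 R1; rewrite /vsub /w; have := v0 i1.
case: (leP (p i1 - t) 0) => H; lra.
Qed.

Lemma wuniq v : in_simplex v -> rnorm (vsub v p) <= rnorm (vsub w p) -> v = w.
Proof.
move=> Hv; have [v0 v1] := Hv => Hle.
have [i1 Hi1] := rnorm_w.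
have R1 : vsub v p i1 - vmin (vsub v p) <= rnorm (vsub v p).
  by rewrite /rnorm lerD2r vmax_ge.
have Hm : -t <= vmin (vsub v p).
  have E2 : vsub v p i1 = v i1 - p i1 by [].
  have := v0 i1.
  have [H|H] := leP (p i1 - t) 0.
    have E : vsub w p i1 = - p i1 by rewrite /vsub /w (max_idPr H) sub0r.
    lra.
  have E : vsub w p i1 = - t by rewrite /vsub /w (max_idPl (ltW H)); ring.
  have Hall : forall i, vsub v p i <= vmin (vsub v p).
    move=> i; have := vmax_ge (vsub v p) i; rewrite /rnorm in Hle Hi1; lra.
  have Hs : \sum_i vsub v p i = 0 by rewrite /vsub sumrB v1 hp subrr.
  have : 0 <= vmin (vsub v p) *+ n.
    have H2 : \sum_(i < n) vsub v p i <= \sum_(i < n) vmin (vsub v p).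
      by apply: ler_sum => i _.
    rewrite sumr_const card_ord Hs in H2; exact H2.
  rewrite pmulrn_lge0; first by move=> Ha Hb; have := t0; lra.
  exact: leq_ltn_trans (leq0n i0) (ltn_ord i0).
have [L1 L2] := L Hv Hm.
apply: functional_extensionality => i; rewrite /w.
case: (ltP t (p i)) => H.
  by rewrite L1 //; apply/esym/max_idPl; rewrite subr_ge0 ltW.
rewrite L2; last by rewrite -leNgt.
by apply/esym/max_idPr; rewrite subr_le0.
Qed.
End Aux.


Theorem theorem2 (R : realType) (n : nat) (a x : 'I_n -> R)
  (ha : forall i, 0 < a i)
  (hx : \sum_(j < n) a j * x j != 0) :
  (exists w, is_simplex_proj (PF a x) w) /\
  forall w, is_simplex_proj (PF a x) w ->
    [/\ in_simplex w,
        forall v, in_simplex v -> rnorm (vsub w (PF a x)) <= rnorm (vsub v (PF a x)) &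
        forall v, in_simplex v ->
          rnorm (vsub v (PF a x)) <= rnorm (vsub w (PF a x)) -> v = w].
Proof.
have hp : \sum_i PF a x i = 1.
  by rewrite /PF -mulr_suml divff.
have [i0 _] : exists i0 : 'I_n, True.
  case: n a x ha hx {hp} => [|m] a' x' _ hx'; last by exists ord0.
  by rewrite big_ord0 eqxx in hx'.
have [t [t0 ht]] := tau_ex hp i0.
split; first by exists (fun i => Num.max (PF a x i - t) 0); exact: w_proj.
move=> w' Hw'; rewrite (w_uniq ht Hw').
split; first exact: w_simplex.
  move=> v Hv; exact: (wopt i0 ht Hv).
move=> v Hv; exact: (wuniq hp i0 t0 ht Hv).
Qed.
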